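(* $\mathfrak{B}(V)=F\oplus\mathfrak{L}^-(V)$ if and only if all of the following hold: $p_{ii}=-1$ for all $i$; $p_{ij}p_{ji}=1$ for all $i\neq j$; and for every $m\ge2$ and every choice of pairwise distinct letters $h_1,\dots,h_m\in\{x_1,\dots,x_n\}$ there exists $\tau\in\mathbb{S}_m$ with $$(p_{h_{\tau(1)},h_{\tau(2)}\cdots h_{\tau(m)}}-1)(p_{h_{\tau(2)},h_{\tau(3)}\cdots h_{\tau(m)}}-1)\cdots(p_{h_{\tau(m-1)},h_{\tau(m)}}-1)\neq0 .$$
   Context: $V$ is a braided vector space of diagonal type over an algebraically closed field $F$ of characteristic $0$ with basis $x_1,\dots,x_n$, braiding $C(x_i\otimes x_j)=q_{ij}x_j\otimes x_i$, Nichols algebra $\mathfrak{B}(V)$ ($\mathbb{Z}^n$-graded, $\deg x_i=e_i$); $\chi(e_i,e_j)=q_{ij}$, $p_{ij}:=q_{ij}$, and $p_{u,v}:=\chi(\deg u,\deg v)$ for homogeneous $u,v$ (so $p_{h,h'h''\cdots}$ is the product of $p_{h,h'},p_{h,h''},\dots$). $\mathfrak{L}^-(V)$ is the Lie subalgebra of $\mathfrak{B}(V)$ generated by $V$ under the commutator $[a,b]^-=ab-ba$. *)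

(* Defs.v *)
From HB Require Import structures.
From mathcomp Require Import all_boot all_order all_algebra all_fingroup.
Set Implicit Arguments. Unset Strict Implicit. Unset Printing Implicit Defensive.
Import GRing.Theory.
Local Open Scope ring_scope.

(* Noncommutative formal series in x_0..x_{n-1} over F: coefficient functions
   on words.  T(V) is the subset generated (as an algebra) by 1 and the letters. *)
Definition ncs (F : fieldType) (n : nat) := seq 'I_n -> F.

Section NC.
Variables (F : fieldType) (n : nat).
Implicit Types (u v : ncs F n) (w : seq 'I_n).

Definition tzero : ncs F n := fun _ => 0.
Definition tone : ncs F n := fun w => (size w == 0%N)%:R.
Definition tletter (i : 'I_n) : ncs F n := fun w => (w == [:: i])%:R.
Definition tadd u v : ncs F n := fun w => u w + v w.
Definition tscale (c : F) u : ncs F n := fun w => c * u w.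
Definition tsub u v : ncs F n := fun w => u w - v w.
Definition tmul u v : ncs F n :=
  fun w => \sum_(k < (size w).+1) u (take k w) * v (drop k w).
Definition tcomm u v : ncs F n := tsub (tmul u v) (tmul v u).

Inductive tensT : ncs F n -> Prop :=
| tensT_one : tensT tone
| tensT_letter i : tensT (tletter i)
| tensT_add u v : tensT u -> tensT v -> tensT (tadd u v)
| tensT_scale c u : tensT u -> tensT (tscale c u)
| tensT_mul u v : tensT u -> tensT v -> tensT (tmul u v).

Inductive lieL : ncs F n -> Prop :=
| lieL_zero : lieL tzero
| lieL_letter i : lieL (tletter i)
| lieL_add u v : lieL u -> lieL v -> lieL (tadd u v)
| lieL_scale c u : lieL u -> lieL (tscale c u)
| lieL_comm u v : lieL u -> lieL v -> lieL (tcomm u v).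

Variable q : 'I_n -> 'I_n -> F.

(* skew derivation d_i: d_i(x_j) = delta_ij, d_i(uv) = u d_i(v) + chi(e_i, deg v) d_i(u) v,
   i.e. the component of the coproduct ending with ( _ ⊗ x_i ).  *)
Definition tderiv (i : 'I_n) u : ncs F n :=
  fun w => \sum_(t < (size w).+1)
             (\prod_(s <- drop t w) q i s) * u (take t w ++ i :: drop t w).

(* nz k u : the degree-k component of u lies in the Nichols ideal
   (degree 0: it vanishes; degree k+1: all d_i send it into the ideal). *)
Fixpoint nz (k : nat) u : Prop :=
  match k with
  | 0 => u [::] = 0
  | k'.+1 => forall i, nz k' (tderiv i u)
  end.

Definition nichols_zero u : Prop := forall k, nz k u.

Definition nichols_eq_F_plus_Lie : Prop :=
  (forall u, tensT u -> exists (c : F) (l : ncs F n),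
      lieL l /\ nichols_zero (tsub (tsub u (tscale c tone)) l))
  /\ (forall (c : F) (l : ncs F n), lieL l ->
      nichols_zero (tsub (tscale c tone) l) -> c = 0).

End NC.

(* Main.v *)
Require Import Defs.
From HB Require Import structures.
From mathcomp Require Import all_boot all_order all_algebra all_fingroup.
From mathcomp Require Import ring.
From Stdlib Require Import Classical.
Set Warnings "-notation-overridden -ambiguous-paths".
Set Implicit Arguments. Unset Strict Implicit. Unset Printing Implicit Defensive.
Import GRing.Theory.
Local Open Scope ring_scope.

Section Work.
Variables (F : fieldType) (n : nat) (q : 'I_n -> 'I_n -> F).
Implicit Types (u v l : ncs F n) (w sg : seq 'I_n).

Fixpoint SW (k : nat) (f : seq 'I_n -> F) : F :=
  match k with 0 => f [::] | k'.+1 => \sum_(x : 'I_n) SW k' (fun w => f (x :: w)) end.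

Lemma SW_eq k f g : (forall w, size w = k -> f w = g w) -> SW k f = SW k g.
Proof.
elim: k f g => [|k IH] f g H /=; first exact: H.
apply: eq_bigr => x _; apply: IH => w Hw; apply: H; by rewrite /= Hw.
Qed.

Lemma SW0 k : SW k (fun _ => 0) = 0.
Proof. by elim: k => [|k IH] //=; rewrite big1. Qed.

Lemma SWD k f g : SW k (fun w => f w + g w) = SW k f + SW k g.
Proof.
elim: k f g => [|k IH] f g //=; rewrite -big_split /=; apply: eq_bigr => x _; exact: IH.
Qed.

Lemma SWZ k c f : SW k (fun w => c * f w) = c * SW k f.
Proof.
elim: k f => [|k IH] f //=; rewrite mulr_sumr; apply: eq_bigr => x _; exact: IH.
Qed.

Lemma SWN k f : SW k (fun w => - f w) = - SW k f.
Proof. rewrite -mulN1r -SWZ; apply: SW_eq => w _; by rewrite mulN1r. Qed.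

Lemma SW_sum (I : Type) (r : seq I) (P : pred I) k (f : I -> seq 'I_n -> F) :
  SW k (fun w => \sum_(j <- r | P j) f j w) = \sum_(j <- r | P j) SW k (f j).
Proof.
elim: r => [|j r IH]; first by rewrite big_nil (SW_eq (g := fun _ => 0)) ?SW0 // => w; rewrite big_nil.
rewrite big_cons; case Pj: (P j).
  rewrite -IH -SWD; apply: SW_eq => w _; by rewrite big_cons Pj.
rewrite -IH; apply: SW_eq => w _; by rewrite big_cons Pj.
Qed.

Lemma SW_split a b (G : seq 'I_n -> seq 'I_n -> F) :
  SW (a + b) (fun w => G (take a w) (drop a w)) = SW a (fun w1 => SW b (fun w2 => G w1 w2)).
Proof.
elim: a G => [|a IH] G /=.
  rewrite ?add0n; apply: SW_eq => w _; by rewrite ?take0 ?drop0.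
apply: eq_bigr => x _; exact: (IH (fun w1 w2 => G (x :: w1) w2)).
Qed.


Fixpoint phi w : F := if w is a :: r then (\prod_(s <- r | (s < a)%N) q a s) * phi r else 1.
Definition Qf (a b : seq 'I_n) : F := \prod_(x <- a) \prod_(s <- b | (s < x)%N) q x s.
Definition Nk k (sg : seq 'I_n) u : F := SW k (fun w => if perm_eq w sg then phi w * u w else 0).
Definition N sg u := Nk (size sg) sg u.
Definition Cx (x : 'I_n) sg : F := \prod_(s <- rem x sg | (s < x)%N) q x s.

Lemma phi_cat w1 w2 : phi (w1 ++ w2) = phi w1 * phi w2 * Qf w1 w2.
Proof.
elim: w1 => [|a r IH] /=; first by rewrite /Qf big_nil mul1r mulr1.
rewrite IH /Qf big_cons big_cat /=. rewrite !mulrA; congr (_ * _).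
rewrite -!mulrA; congr (_ * _). rewrite mulrC -!mulrA; congr (_ * _); by rewrite mulrC.
Qed.

Lemma Qf_perm a a' b b' : perm_eq a a' -> perm_eq b b' -> Qf a b = Qf a' b'.
Proof.
move=> Ha Hb; rewrite /Qf (perm_big _ Ha); apply: eq_bigr => x _; exact: perm_big.
Qed.

Lemma N_ext sg u v : (forall w, perm_eq w sg -> u w = v w) -> N sg u = N sg v.
Proof.
move=> H; apply: SW_eq => w _; case: ifP => // Hw; by rewrite H.
Qed.

Lemma N_perm sg sg' u : perm_eq sg sg' -> N sg u = N sg' u.
Proof.
move=> H; rewrite /N (perm_size H); apply: SW_eq => w _.
by rewrite (permPr H).
Qed.

Lemma N_add sg u v : N sg (tadd u v) = N sg u + N sg v.
Proof.
rewrite /N /Nk -SWD; apply: SW_eq => w _; rewrite /tadd; case: ifP => _; by rewrite ?mulrDr ?addr0.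
Qed.

Lemma N_scale sg c u : N sg (tscale c u) = c * N sg u.
Proof.
rewrite /N /Nk -SWZ; apply: SW_eq => w _; rewrite /tscale; case: ifP => _; by rewrite ?mulr0 // mulrCA.
Qed.

Lemma N_sub sg u v : N sg (tsub u v) = N sg u - N sg v.
Proof.
rewrite /N /Nk -SWN -SWD; apply: SW_eq => w _; rewrite /tsub; case: ifP => _; by rewrite ?mulrBr ?subr0.
Qed.

Lemma N_zero sg : N sg (@tzero F n) = 0.
Proof. rewrite /N /Nk (SW_eq (g := fun _ => 0)) ?SW0 // => w _; rewrite /tzero; by case: ifP => _; rewrite ?mulr0. Qed.

Lemma N_nil u : N [::] u = u [::].
Proof. by rewrite /N /Nk /= mul1r. Qed.

Lemma N_rec sg u : sg != [::] ->
  N sg u = \sum_(x : 'I_n) (if x \in sg then Cx x sg * N (rem x sg) (fun y => u (x :: y)) else 0).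
Proof.
case: sg => [|y sg'] // _; rewrite /N /Nk /=; apply: eq_bigr => x _.
case: ifP => Hx.
  have Hs : size (rem x (y :: sg')) = size sg'.
    by rewrite size_rem.
  rewrite Hs -SWZ; apply: SW_eq => w Hw.
  have Hp := perm_to_rem Hx.
  rewrite (permPr Hp) perm_cons; case: ifP => Hwp; last by rewrite mulr0.
  rewrite /= /Cx (perm_big _ Hwp); by rewrite !mulrA.
rewrite (SW_eq (g := fun _ => 0)) ?SW0 // => w _; case: ifP => // Hp.
by move: Hx; rewrite -(perm_mem Hp) in_cons eqxx.
Qed.

Definition Kf (i : 'I_n) sg : F := \prod_(s <- sg | (i < s)%N) q i s.
Definition Pf (i : 'I_n) sg : F := \prod_(s <- sg) q i s.

Lemma split_lt_gt (x : 'I_n) (r : seq 'I_n) (f : 'I_n -> F) : x \notin r ->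
  (\prod_(s <- r | (s < x)%N) f s) * (\prod_(s <- r | (x < s)%N) f s) = \prod_(s <- r) f s.
Proof.
elim: r => [|a r IH]; first by rewrite !big_nil mulr1.
rewrite in_cons negb_or => /andP [Hxa Hr]; rewrite !big_cons -IH //.
case: ltngtP => H1 /=; first by rewrite mulrA.
  by rewrite mulrCA.
by move: Hxa; rewrite (val_inj H1) eqxx.
Qed.

Lemma deriv_cons i u x y : tderiv q i u (x :: y) =
  Pf i (x :: y) * u (i :: x :: y) + tderiv q i (fun y => u (x :: y)) y.
Proof. by rewrite /tderiv /= big_ord_recl /=. Qed.

Lemma N_lin sg a f g : N sg (fun w => a * f w + g w) = a * N sg f + N sg g.
Proof. exact: (N_add sg (tscale a f) g) || (rewrite N_add N_scale //). Qed.

Hypothesis H1 : forall i, q i i = -1.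
Hypothesis H2 : forall i j, i != j -> q i j * q j i = 1.

Lemma Kf_rem x i sg : x \in sg -> Kf i sg = (if (i < x)%N then q i x else 1) * Kf i (rem x sg).
Proof.
move=> Hx; rewrite /Kf (perm_big _ (perm_to_rem Hx)) big_cons; by case: ifP; rewrite ?mul1r.
Qed.

Lemma Cx_cons x i sg : x != i -> Cx x (i :: sg) = (if (i < x)%N then q x i else 1) * Cx x sg.
Proof.
move=> Hxi; rewrite /Cx /= eq_sym (negbTE Hxi) big_cons; by case: ifP; rewrite ?mul1r.
Qed.

Lemma Pf_rem x i sg : x \in sg -> Pf i sg = q i x * Pf i (rem x sg).
Proof. move=> Hx; by rewrite /Pf (perm_big _ (perm_to_rem Hx)) big_cons. Qed.

Lemma N_deriv k : forall sg u i, uniq sg -> size sg = k ->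
  N sg (tderiv q i u) = if i \in sg then 0 else Kf i sg * N (i :: sg) u.
Proof.
elim: k => [|k IH] sg u i Hu Hs.
  move/size0nil: Hs => ->; rewrite N_nil in_nil /Kf big_nil mul1r.
  rewrite N_rec // (bigD1 i) //= mem_seq1 eqxx big1 ?addr0; last first.
    by move=> x Hx; rewrite mem_seq1 (negbTE Hx).
  rewrite /Cx /= eqxx big_nil mul1r N_nil /tderiv /= big_ord_recl big_ord0 /=.
  by rewrite big_nil mul1r addr0.
have Hne : sg != [::] by case: sg Hs {Hu}.
rewrite N_rec //.
have E : forall x, x \in sg -> N (rem x sg) (fun y => tderiv q i u (x :: y)) =
   Pf i sg * N (rem x sg) (fun y => u (i :: x :: y)) +
   (if i \in rem x sg then 0 else Kf i (rem x sg) * N (i :: rem x sg) (fun y => u (x :: y))).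
  move=> x Hx; rewrite -IH ?rem_uniq //; last by rewrite size_rem // Hs.
  rewrite -N_lin; apply: N_ext => y Hy; rewrite deriv_cons; congr (_ * _ + _).
  rewrite /Pf; apply: perm_big.
  by rewrite (permPr (perm_to_rem Hx)) perm_cons.
rewrite (eq_bigr (fun x => (if x \in sg then Pf i sg * (Cx x sg * N (rem x sg) (fun y => u (i :: x :: y))) else 0)
   + (if x \in sg then Cx x sg * (if i \in rem x sg then 0 else Kf i (rem x sg) * N (i :: rem x sg) (fun y => u (x :: y))) else 0))); last first.
  move=> x _; case: ifP => Hx; last by rewrite addr0.
  by rewrite E // mulrDr mulrCA.
rewrite big_split /=.
rewrite (eq_bigr (fun x => Pf i sg * (if x \in sg then Cx x sg * N (rem x sg) (fun y => u (i :: x :: y)) else 0))); last first.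
  by move=> x _; case: ifP; rewrite ?mulr0.
rewrite -mulr_sumr -(N_rec (fun y => u (i :: y))) //.
case: ifP => Hi.
  rewrite (bigD1 i) //= Hi big1 ?addr0; last first.
    move=> x Hx; case: ifP => // Hxs; by rewrite (mem_rem_uniq _ Hu) inE eq_sym Hx Hi mulr0.
  rewrite (mem_rem_uniq _ Hu) inE eqxx /=.
  rewrite -(N_perm _ (perm_to_rem Hi)) mulrA.
  rewrite (split_lt_gt (fun s => q i s)); last by rewrite (mem_rem_uniq _ Hu) inE eqxx.
  rewrite (Pf_rem _ Hi) H1 /Pf; ring.
rewrite [N (i :: sg) u]N_rec // [in RHS](bigD1 i) //= in_cons eqxx /= [in LHS](bigD1 i) //= Hi.
rewrite add0r mulrDr.
have -> : Kf i sg * (Cx i (i :: sg) * N sg (fun y => u (i :: y))) = Pf i sg * N sg (fun y => u (i :: y)).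
  rewrite mulrA; congr (_ * _); rewrite /Cx /= eqxx /Kf mulrC split_lt_gt //; by rewrite Hi.
congr (_ + _); rewrite mulr_sumr; apply: eq_bigr => x Hxi.
have Hix : i != x by rewrite eq_sym.
rewrite in_cons (negbTE Hxi) /=; case: ifP => Hx; last by rewrite mulr0.
have Hir : i \notin rem x sg.
  apply: contra (negbT Hi); exact: mem_rem.
rewrite (negbTE Hir) /= (negbTE Hix) (Cx_cons _ Hxi) (Kf_rem i Hx).
case: ifP => Hlt; last by rewrite !mul1r mulrCA.
rewrite mulrCA !mulrA; congr (_ * _); rewrite -!mulrA mulrCA; congr (_ * _).
rewrite mulrA H2 ?mul1r //; by rewrite eq_sym.
Qed.

Hypothesis qnz : forall i j, q i j != 0.

Lemma Kf_neq0 i sg : Kf i sg != 0.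
Proof. rewrite /Kf prodf_seq_neq0; apply/allP => x _; by rewrite qnz implybT. Qed.

Lemma Char k : forall u, nz q k u <-> (forall sg, uniq sg -> size sg = k -> N sg u = 0).
Proof.
elim: k => [|k IH] u /=.
  split=> [H sg _ /size0nil -> | H]; first by rewrite N_nil.
  by rewrite -N_nil; apply: H.
split=> H.
  case=> [|i sg] //= /andP [Hi Hu] [Hs].
  have := (IH _).1 (H i) sg Hu Hs; rewrite (@N_deriv _ _ u i Hu Hs) (negbTE Hi).
  by move/eqP; rewrite mulf_eq0 (negbTE (Kf_neq0 _ _)) /= => /eqP.
move=> i; apply/(IH _) => sg Hu Hs; rewrite (@N_deriv _ _ u i Hu Hs); case: ifP => // Hi.
by rewrite H ?mulr0 //= ?Hi ?Hu ?Hs.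
Qed.

Lemma Char_all u : nichols_zero q u <-> (forall sg, uniq sg -> N sg u = 0).
Proof.
split=> H.
  move=> sg Hu; exact: ((Char (size sg) u).1 (H _) sg Hu).
move=> k; apply/(Char k u) => sg Hu _; exact: H.
Qed.

Definition supp u (a : seq 'I_n) := forall w, u w != 0 -> perm_eq w a.

Lemma tmul_eval u v a w : supp u a -> (size a <= size w)%N ->
  tmul u v w = u (take (size a) w) * v (drop (size a) w).
Proof.
move=> Hu Hs; have Hlt : (size a < (size w).+1)%N by rewrite ltnS.
rewrite /tmul (bigD1 (Ordinal Hlt)) //= big1 ?addr0 // => k Hk.
case E: (u (take k w) == 0); first by rewrite (eqP E) mul0r.
have := perm_size (Hu _ (negbT E)); rewrite size_takel; last by rewrite -ltnS ltn_ord.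
by move=> Ek; move: Hk; rewrite -val_eqE /= Ek eqxx.
Qed.

Lemma supp_mul u v a b : supp u a -> supp v b -> supp (tmul u v) (a ++ b).
Proof.
move=> Hu Hv w; rewrite /tmul => /eqP.
move=> Hne; case: (pickP (fun k : 'I_(size w).+1 => u (take k w) * v (drop k w) != 0)) => [k Hk | Hall]; last first.
  by case: Hne; rewrite big1 // => k _; move: (Hall k) => /negbFE /eqP.
move: Hk; rewrite mulf_eq0 negb_or => /andP [H1' H2'].
by rewrite -(cat_take_drop k w) perm_cat ?Hu ?Hv.
Qed.

Lemma SW_prod a b f g : SW a (fun w1 => SW b (fun w2 => f w1 * g w2)) = SW a f * SW b g.
Proof.
transitivity (SW a (fun w1 => SW b g * f w1)); last by rewrite SWZ mulrC.
apply: SW_eq => w1 _; by rewrite SWZ mulrC.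
Qed.

Lemma N_mul_supp u v a b : supp u a -> supp v b ->
  N (a ++ b) (tmul u v) = Qf a b * N a u * N b v.
Proof.
move=> Hu Hv; rewrite /N size_cat /Nk.
transitivity (SW (size a + size b) (fun w => (fun w1 w2 => phi (w1 ++ w2) * (u w1 * v w2)) (take (size a) w) (drop (size a) w))).
  apply: SW_eq => w Hw; rewrite (tmul_eval v Hu) ?Hw ?leq_addr //=.
  case: ifP => Hp; first by rewrite cat_take_drop.
  case E: (u (take (size a) w) * v (drop (size a) w) == 0); first by rewrite (eqP E) mulr0.
  move/negbT: E; rewrite mulf_eq0 negb_or => /andP [E1 E2].
  by move: Hp; rewrite -(cat_take_drop (size a) w) perm_cat ?Hu ?Hv.
transitivity (SW (size a) (fun w1 => SW (size b) (fun w2 => phi (w1 ++ w2) * (u w1 * v w2)))).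
  exact: (SW_split (size a) (size b) (fun w1 w2 => phi (w1 ++ w2) * (u w1 * v w2))).
have Ea : SW (size a) (fun w => if perm_eq w a then phi w * u w else 0) = SW (size a) (fun w => phi w * u w).
  apply: SW_eq => w _; case: ifP => // Hp; case E: (u w == 0); first by rewrite (eqP E) mulr0.
  by move: Hp; rewrite Hu ?E.
have Eb : SW (size b) (fun w => if perm_eq w b then phi w * v w else 0) = SW (size b) (fun w => phi w * v w).
  apply: SW_eq => w _; case: ifP => // Hp; case E: (v w == 0); first by rewrite (eqP E) mulr0.
  by move: Hp; rewrite Hv ?E.
rewrite Ea Eb -mulrA -SW_prod -SWZ; apply: SW_eq => w1 _.
rewrite -SWZ; apply: SW_eq => w2 _.
case E1: (u w1 == 0); first by rewrite (eqP E1) !(mulr0, mul0r).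
case E2: (v w2 == 0); first by rewrite (eqP E2) !(mulr0, mul0r).
rewrite phi_cat (Qf_perm (Hu _ (negbT E1)) (Hv _ (negbT E2))).
ring.
Qed.

Definition Pp (a b : seq 'I_n) : F := \prod_(x <- a) \prod_(s <- b) q x s.
Definition Rr (a b : seq 'I_n) : F := \prod_(x <- a) \prod_(s <- b | (x < s)%N) q x s.

Lemma Rr_neq0 a b : Rr a b != 0.
Proof.
rewrite /Rr prodf_seq_neq0; apply/allP => x _; rewrite implyTb prodf_seq_neq0.
by apply/allP => y _; rewrite qnz implybT.
Qed.

Lemma Qdiff a b : (forall x, x \in a -> x \notin b) -> (Qf a b - Qf b a) * Rr a b = Pp a b - 1.
Proof.
move=> Hd; rewrite mulrBl; congr (_ - _).
  rewrite /Qf /Rr /Pp -big_split /=; apply: eq_big_seq => x Hx; exact: split_lt_gt (Hd _ Hx).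
have -> : Qf b a = \prod_(x <- a) \prod_(s <- b | (x < s)%N) q s x.
  rewrite /Qf; under eq_bigr do rewrite big_mkcond; rewrite exchange_big /=.
  by apply: eq_bigr => x _; rewrite [RHS]big_mkcond.
rewrite /Rr -big_split /=; apply: big1 => x _; rewrite -big_split /=; apply: big1 => s Hs.
rewrite H2 //; apply/negP => /eqP E; by rewrite E ltnn in Hs.
Qed.

Lemma Qdiff_neq0 a b : (forall x, x \in a -> x \notin b) -> (Qf a b - Qf b a != 0) = (Pp a b != 1).
Proof.
move=> Hd; rewrite -(subr_eq0 (Pp a b)) -(Qdiff Hd) mulf_eq0 negb_or Rr_neq0 andbT //.
Qed.

Lemma Pp_perm a a' b b' : perm_eq a a' -> perm_eq b b' -> Pp a b = Pp a' b'.
Proof.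
move=> Ha Hb; rewrite /Pp (perm_big _ Ha); apply: eq_bigr => x _; exact: perm_big.
Qed.

Fixpoint chain (a : seq 'I_n) : bool :=
  if a is x :: r then ((r == [::]) || (Pf x r != 1)) && chain r else true.
Definition good (sg : seq 'I_n) : Prop := exists c, perm_eq c sg /\ chain c.

Lemma Pp_cons x a b : Pp (x :: a) b = Pf x b * Pp a b.
Proof. by rewrite /Pp big_cons. Qed.

Lemma Pp_consr x a b : Pp a (x :: b) = (\prod_(s <- a) q s x) * Pp a b.
Proof. rewrite /Pp -big_split /=; apply: eq_bigr => y _; by rewrite big_cons. Qed.

Lemma inv_rel x a : x \notin a -> (\prod_(s <- a) q s x) * Pf x a = 1.
Proof.
move=> Hx; rewrite /Pf -big_split /=; apply: big1_seq => s /andP [_ Hs].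
rewrite H2 //; apply/eqP => E; move: Hx; by rewrite -E Hs.
Qed.

Lemma perm_mid (a : seq 'I_n) x b : perm_eq (a ++ x :: b) (x :: a ++ b).
Proof. by rewrite -cat1s perm_catCA. Qed.

Lemma comb a : forall b, uniq (a ++ b) -> chain a -> chain b -> a != [::] -> b != [::] ->
  Pp a b != 1 -> good (a ++ b).
Proof.
elim: a => [|x a IH] b // Hu /andP [Hxa Hca] Hcb _ Hb HP.
case Ha: (a == [::]).
  move/eqP: Ha => Ha; subst a; exists (x :: b); split => //=.
  move: HP; rewrite Pp_cons /Pp big_nil mulr1 => HP; by rewrite Hcb (negbTE Hb) HP.
move: Hxa; rewrite Ha /= => Hal.
move: Hu; rewrite cat_cons cons_uniq mem_cat negb_or => /andP [/andP [Hxa Hxb] Hu].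
have Hdel := inv_rel Hxa.
set al := Pf x a in Hal Hdel; set de := \prod_(s <- a) q s x in Hdel.
set be := Pf x b; set ga := Pp a b.
have HP' : be * ga != 1 by rewrite /be /ga -Pp_cons.
case Hc: ((ga != 1) && (al * be != 1)).
  case/andP: Hc => Hg Hab.
  have [c [Hc1 Hc2]] := IH b Hu Hca Hcb (negbT Ha) Hb Hg.
  exists (x :: c); split; first by rewrite perm_cons.
  rewrite /= Hc2 andbT; apply/orP; right.
  by rewrite /Pf (perm_big _ Hc1) big_cat.
have [Hb1 Hdg] : be != 1 /\ de * ga != 1.
  move/negbT: Hc; rewrite negb_and !negbK => /orP [/eqP Hg1 | /eqP Hab1].
    split; first by move: HP'; rewrite Hg1 mulr1.
    rewrite Hg1 mulr1; apply: contra Hal => /eqP Hd1; by rewrite -Hdel Hd1 mul1r.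
  have Hbd : be = de by rewrite -[be]mul1r -Hdel -mulrA Hab1 mulr1.
  split; last by rewrite -Hbd.
  rewrite Hbd; apply: contra Hal => /eqP Hd1; by rewrite -Hdel Hd1 mul1r.
have Hu2 : uniq (a ++ x :: b).
  by rewrite (perm_uniq (perm_mid a x b)) /= mem_cat negb_or Hxa Hxb.
have Hcxb : chain (x :: b) by rewrite /= Hcb andbT; apply/orP; right; exact: Hb1.
have HPd : Pp a (x :: b) != 1 by rewrite Pp_consr -/de -/ga.
have [c [Hc1 Hc2]] := IH (x :: b) Hu2 Hca Hcxb (negbT Ha) isT HPd.
exists c; split => //; apply: perm_trans Hc1 _; exact: (perm_mid a x b).
Qed.

Lemma tmul_nil u v : tmul u v [::] = u [::] * v [::].
Proof. by rewrite /tmul big_ord_recl big_ord0 addr0. Qed.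

Lemma lieL_nil l : lieL l -> l [::] = 0.
Proof.
elim=> {l} //=.
- move=> u v _ Hu _ Hv; by rewrite /tadd Hu Hv addr0.
- move=> c u _ Hu; by rewrite /tscale Hu mulr0.
- move=> u v _ Hu _ Hv; by rewrite /tcomm /tsub !tmul_nil Hu Hv mulr0 subrr.
Qed.

Definition restr (A : {set 'I_n}) u : ncs F n :=
  fun w => if uniq w && ([set x in w] == A) then u w else 0.

Lemma supp_restr A u : supp (restr A u) (enum A).
Proof.
move=> w; rewrite /restr; case: ifP => [/andP [Hu /eqP HA] _ | _]; last by rewrite eqxx.
apply: uniq_perm => //; first exact: enum_uniq.
by move=> x; rewrite mem_enum -HA inE.
Qed.

Lemma N_sum (I : Type) (r : seq I) (P : pred I) sg (f : I -> ncs F n) :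
  N sg (fun w => \sum_(i <- r | P i) f i w) = \sum_(i <- r | P i) N sg (f i).
Proof.
rewrite /N /Nk -SW_sum; apply: SW_eq => w _; case: ifP => _; first by rewrite mulr_sumr.
by rewrite big1.
Qed.

Lemma compl_inv (S A : {set 'I_n}) : A \subset S -> S :\: (S :\: A) = A.
Proof.
move/subsetP=> HA; apply/setP => x; rewrite !inE.
case Hx: (x \in A); first by rewrite HA.
by case: (x \in S).
Qed.

Lemma perm_split sg (A : {set 'I_n}) : uniq sg -> A \subset [set x in sg] ->
  perm_eq sg (enum A ++ enum ([set x in sg] :\: A)).
Proof.
move=> Hu /subsetP HA; apply: uniq_perm => //.
  rewrite cat_uniq !enum_uniq /= andbT; apply/hasPn => x.
  by rewrite !mem_enum !inE => /andP [].
move=> x; rewrite mem_cat !mem_enum !inE.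
case Hx: (x \in A) => //=; by move: (HA x Hx); rewrite inE.
Qed.

Lemma N_decomp sg u v : uniq sg ->
  N sg (tmul u v) = \sum_(A : {set 'I_n} | A \subset [set x in sg])
    Qf (enum A) (enum ([set x in sg] :\: A)) * N (enum A) u * N (enum ([set x in sg] :\: A)) v.
Proof.
move=> Hu; set S := [set x in sg].
transitivity (N sg (fun w => \sum_(A : {set 'I_n} | A \subset S) tmul (restr A u) (restr (S :\: A) v) w)).
  apply: N_ext => w Hw; have Huw : uniq w by rewrite (perm_uniq Hw).
  rewrite /tmul exchange_big /=; apply: eq_bigr => j _.
  set A0 := [set x in take j w].
  have HA0 : A0 \subset S.
    apply/subsetP => x; rewrite !inE => Hx; rewrite -(perm_mem Hw); exact: mem_take Hx.
  rewrite (bigD1 A0) //= big1 ?addr0; last first.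
    move=> A /andP [_ HA]; rewrite /restr (take_uniq _ Huw) /=.
    by rewrite eq_sym (negbTE HA) mul0r.
  rewrite /restr (take_uniq _ Huw) (drop_uniq _ Huw) eqxx /=.
  suff -> : [set x in drop j w] == S :\: A0 by [].
  apply/eqP/setP => x; rewrite !inE -(perm_mem Hw).
  have Hh : ~~ has (mem (take j w)) (drop j w).
    by move: Huw; rewrite -{1}(cat_take_drop j w) cat_uniq => /and3P [].
  have -> : (x \in w) = (x \in take j w) || (x \in drop j w) by rewrite -mem_cat cat_take_drop.
  case Hd: (x \in drop j w); last by rewrite orbF andNb.
  rewrite orbT andbT; symmetry; apply: contra Hh => Ht; apply/hasP; by exists x.
rewrite N_sum; apply: eq_bigr => A HA.
rewrite (N_perm _ (perm_split Hu HA)) (N_mul_supp (@supp_restr A u) (@supp_restr (S :\: A) v)).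
congr (_ * _ * _); apply: N_ext => w Hw; rewrite /restr.
  rewrite (perm_uniq Hw) enum_uniq /=; suff -> : [set x in w] == A by [].
  by apply/eqP/setP => x; rewrite inE (perm_mem Hw) mem_enum.
rewrite (perm_uniq Hw) enum_uniq /=; suff -> : [set x in w] == S :\: A by [].
by apply/eqP/setP => x; rewrite inE (perm_mem Hw) mem_enum.
Qed.

Lemma chain_small (a : seq 'I_n) : (size a <= 1)%N -> chain a.
Proof. by case: a => [|x [|y r]]. Qed.

Lemma N_letter_big sg i : (1 < size sg)%N -> N sg (tletter F i) = 0.
Proof.
move=> Hs; rewrite /N /Nk (SW_eq (g := fun _ => 0)) ?SW0 // => w Hw.
rewrite /tletter; case: ifP => _; last by [].
suff -> : (w == [:: i]) = false by rewrite mulr0.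
apply/negP => /eqP E; by rewrite -Hw E in Hs.
Qed.

Lemma reindex_compl (S : {set 'I_n}) (G : {set 'I_n} -> F) :
  \sum_(A : {set 'I_n} | A \subset S) G A = \sum_(A : {set 'I_n} | A \subset S) G (S :\: A).
Proof.
rewrite (reindex_onto (fun A => S :\: A) (fun A => S :\: A)); last by move=> A HA; rewrite compl_inv.
apply: eq_bigl => A; rewrite subsetDl /=; apply/eqP/idP => [E | HA]; last exact: compl_inv.
by rewrite -E subsetDl.
Qed.

Lemma lemG l : lieL l -> forall sg, uniq sg -> N sg l != 0 -> good sg.
Proof.
elim=> {l}.
- by move=> sg _; rewrite N_zero eqxx.
- move=> i sg Hu; case: (leqP (size sg) 1) => Hs; first by exists sg; rewrite perm_refl chain_small.
  by rewrite N_letter_big // eqxx.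
- move=> u v _ IHu _ IHv sg Hu; rewrite N_add => H.
  case Eu: (N sg u == 0); last exact: IHu (negbT Eu).
  by apply: IHv; move: H; rewrite (eqP Eu) add0r.
- move=> c u _ IHu sg Hu; rewrite N_scale mulf_eq0 negb_or => /andP [_ H]; exact: IHu.
move=> u v Lu IHu Lv IHv sg Hu H; apply: NNPP => Hng; move: H; apply/negP; rewrite negbK.
rewrite /tcomm N_sub subr_eq0 !N_decomp //.
set S := [set x in sg].
apply/eqP; rewrite [in RHS](reindex_compl S); apply: eq_bigr => A HA.
rewrite (compl_inv HA).
case Ea: (N (enum A) u == 0); first by rewrite (eqP Ea) !(mulr0, mul0r).
case Eb: (N (enum (S :\: A)) v == 0); first by rewrite (eqP Eb) !(mulr0, mul0r).
have Hd : forall x, x \in enum A -> x \notin enum (S :\: A).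
  by move=> x; rewrite !mem_enum !inE => ->.
suff -> : Qf (enum A) (enum (S :\: A)) = Qf (enum (S :\: A)) (enum A) by rewrite -!mulrA [X in _ * X]mulrC.
apply/eqP; rewrite -subr_eq0; apply: contraT => HQ; exfalso; apply: Hng.
rewrite Qdiff_neq0 // in HQ.
have [a [Ha1 Ha2]] := IHu _ (enum_uniq _) (negbT Ea).
have [b [Hb1 Hb2]] := IHv _ (enum_uniq _) (negbT Eb).
have HsP := perm_split Hu HA.
have Hne : forall (s : seq 'I_n) (w : ncs F n), lieL w -> N s w != 0 -> s != [::].
  move=> s w Lw; apply: contra => /eqP ->; by rewrite N_nil lieL_nil.
have [c [Hc1 Hc2]] : good (a ++ b).
  apply: comb => //.
  - by rewrite (perm_uniq (perm_cat Ha1 Hb1)) -(perm_uniq HsP).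
  - by rewrite -size_eq0 (perm_size Ha1) size_eq0 (Hne _ _ Lu (negbT Ea)).
  - by rewrite -size_eq0 (perm_size Hb1) size_eq0 (Hne _ _ Lv (negbT Eb)).
  - by rewrite (Pp_perm Ha1 Hb1).
exists c; split => //; apply: perm_trans Hc1 _; rewrite perm_sym.
apply: perm_trans HsP _; by rewrite perm_cat // perm_sym.
Qed.

Fixpoint br (a : seq 'I_n) : ncs F n :=
  if a is x :: r then (if r is [::] then tletter F x else tcomm (tletter F x) (br r)) else @tzero F n.

Fixpoint mono (a : seq 'I_n) : ncs F n :=
  if a is x :: r then tmul (tletter F x) (mono r) else @tone F n.

Lemma lieL_br a : lieL (br a).
Proof.
elim: a => [|x r IH] /=; first exact: lieL_zero.
case: r IH => [|y r] IH; first exact: lieL_letter.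
apply: lieL_comm => //; exact: lieL_letter.
Qed.

Lemma tensT_mono a : tensT (mono a).
Proof.
elim: a => [|x r IH] /=; first exact: tensT_one.
apply: tensT_mul => //; exact: tensT_letter.
Qed.

Lemma supp_letter x : supp (tletter F x) [:: x].
Proof. move=> w; rewrite /tletter; case E: (w == [:: x]); first by rewrite (eqP E) perm_refl. by rewrite eqxx. Qed.

Lemma supp_br a : a != [::] -> supp (br a) a.
Proof.
elim: a => [|x r IH] // _; case: r IH => [|y r] IH; first exact: supp_letter.
move=> w; rewrite /= /tcomm /tsub => H.
case E: (tmul (tletter F x) (br (y :: r)) w == 0).
  move: H; rewrite (eqP E) sub0r oppr_eq0 => H.
  have := supp_mul (IH isT) (@supp_letter x) H.
  move=> Hp; apply: perm_trans Hp _; by rewrite -cat1s perm_catC.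
exact: (supp_mul (@supp_letter x) (IH isT) (negbT E)).
Qed.

Lemma supp_mono a : supp (mono a) a.
Proof.
elim: a => [|x r IH] /=.
  move=> w; rewrite /tone; case: w => //= y w; by rewrite eqxx.
exact: supp_mul (@supp_letter x) IH.
Qed.

Lemma N_letter1 x : N [:: x] (tletter F x) = 1.
Proof.
rewrite N_rec // (bigD1 x) //= mem_seq1 eqxx big1 ?addr0; last first.
  by move=> y Hy; rewrite mem_seq1 (negbTE Hy).
by rewrite /Cx /= eqxx big_nil mul1r N_nil /tletter eqxx.
Qed.

Lemma Qf_neq0 a b : Qf a b != 0.
Proof.
rewrite /Qf prodf_seq_neq0; apply/allP => x _; rewrite implyTb prodf_seq_neq0.
by apply/allP => y _; rewrite qnz implybT.
Qed.

Lemma N_mono a : N a (mono a) != 0.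
Proof.
elim: a => [|x r IH] /=; first by rewrite N_nil /tone /= oner_eq0.
rewrite -cat1s (N_mul_supp (@supp_letter x) (@supp_mono r)) N_letter1 mulr1.
by rewrite mulf_neq0 // Qf_neq0.
Qed.

Lemma N_br a : uniq a -> chain a -> a != [::] -> N a (br a) != 0.
Proof.
elim: a => [|x r IH] // Hu Hc _; case: r IH Hu Hc => [|y r] IH Hu Hc.
  by rewrite /= N_letter1 oner_eq0.
move: Hu Hc; set r' := y :: r => /andP [Hx Hu] /andP [Hp Hc].
have Hr : r' != [::] by [].
rewrite /= -/r' /tcomm N_sub.
rewrite -cat1s (N_mul_supp (@supp_letter x) (supp_br Hr)).
have Hpc : perm_eq ([:: x] ++ r') (r' ++ [:: x]) by rewrite perm_catC.
rewrite (N_perm _ Hpc) (N_mul_supp (supp_br Hr) (@supp_letter x)) N_letter1.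
rewrite mulr1 mulr1 -mulrBl mulf_neq0 // ?IH //.
rewrite Qdiff_neq0; last by move=> z; rewrite mem_seq1 => /eqP ->.
by rewrite Pp_cons /Pp big_nil mulr1; move: Hp; rewrite orFb.
Qed.

Lemma chain_nth (a : seq 'I_n) d :
  chain a <-> (forall k, (k.+1 < size a)%N -> Pf (nth d a k) (drop k.+1 a) != 1).
Proof.
elim: a => [|x r IH] /=; first by split.
split.
  move=> /andP [H0 Hc] [|k] Hk /=.
    by move: H0; rewrite drop0; case: r Hk {IH Hc}.
  by apply: (IH.1 Hc k).
move=> H; apply/andP; split.
  case: r H {IH} => // y r H; apply/orP; right; move: (H 0%N isT); by rewrite /= ?drop0.
by apply/IH => k Hk; exact: (H k.+1 Hk).
Qed.

Lemma inner_conv m (a : seq 'I_n) d (g : 'I_m -> 'I_n) (k : 'I_m) :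
  size a = m -> (forall j, g j = nth d a j) ->
  \prod_(t < m | (k < t)%N) q (g k) (g t) = Pf (nth d a k) (drop k.+1 a).
Proof.
move=> Hs Hg; rewrite /Pf.
have -> : drop k.+1 a = [seq nth d a t | t <- iota k.+1 (m - k.+1)].
  rewrite map_nth_iota ?Hs // take_oversize // size_drop Hs //.
rewrite big_map -[iota _ _]/(index_iota k.+1 m) big_geq_mkord.
by apply: eq_bigr => t _; rewrite !Hg.
Qed.

Lemma prod_conv m (a : seq 'I_n) d (g : 'I_m -> 'I_n) :
  size a = m -> (forall j, g j = nth d a j) ->
  (\prod_(k < m | (k.+1 < m)%N) ((\prod_(t < m | (k < t)%N) q (g k) (g t)) - 1) != 0) = chain a.
Proof.
move=> Hs Hg; apply/idP/idP.
  move/prodf_neq0 => H; apply/(chain_nth _ d) => k Hk.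
  have Hkm : (k < m)%N by rewrite -Hs ltnW.
  have Hk' : ((Ordinal Hkm).+1 < m)%N by rewrite /= -Hs.
  move: (H (Ordinal Hkm) Hk').
  by rewrite subr_eq0 (inner_conv _ Hs Hg).
move/(chain_nth _ d) => H; apply/prodf_neq0 => k Hk.
by rewrite subr_eq0 (inner_conv _ Hs Hg) H // Hs.
Qed.

Definition H3prop := forall (m : nat) (h : 'I_m -> 'I_n), (2 <= m)%N -> injective h ->
  exists tau : 'S_m,
    \prod_(k < m | (k.+1 < m)%N) ((\prod_(t < m | (k < t)%N) q (h (tau k)) (h (tau t))) - 1) != 0.

Lemma exists_chain (H3 : H3prop) (S : {set 'I_n}) : exists a, perm_eq a (enum S) /\ chain a.
Proof.
case: (leqP (size (enum S)) 1) => Hs; first by exists (enum S); rewrite perm_refl chain_small.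
have d : 'I_n by case: (enum S) Hs => [|x _] // _; exact: x.
pose m := size (enum S).
pose h := fun j : 'I_m => nth d (enum S) j.
have hinj : injective h.
  move=> j1 j2 /eqP; rewrite /h nth_uniq ?enum_uniq // => /eqP; exact: val_inj.
have [tau Htau] := H3 m h Hs hinj.
pose a := [seq h (tau j) | j <- enum 'I_m].
have Hsa : size a = m by rewrite size_map size_enum_ord.
have Hg : forall j, (fun j => h (tau j)) j = nth d a j.
  by move=> j; rewrite /a (nth_map j) ?size_enum_ord // nth_ord_enum.
exists a; split; last by rewrite -(prod_conv Hsa Hg).
have Hua : uniq a.
  rewrite map_inj_uniq ?enum_uniq // => j1 j2 /hinj; exact: perm_inj.
apply: uniq_perm => //; first exact: enum_uniq.
have Hsub : {subset a <= enum S}.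
  move=> x /mapP [j _ ->]; rewrite /h mem_nth //.
by have [_ Heq] := uniq_min_size Hua Hsub (eq_leq (esym Hsa)).
Qed.

Lemma N_tone_ne sg : sg != [::] -> N sg (@tone F n) = 0.
Proof.
move=> Hne; rewrite /N /Nk (SW_eq (g := fun _ => 0)) ?SW0 // => w Hw.
rewrite /tone Hw; case: sg Hne {Hw} => // x sg _ /=; by case: ifP; rewrite ?mulr0.
Qed.

Lemma build (H3 : H3prop) u (r : seq {set 'I_n}) : uniq r -> exists l, lieL l /\
  forall sg, uniq sg -> sg != [::] -> N sg l = if [set x in sg] \in r then N sg u else 0.
Proof.
elim: r => [|S r IH] /=.
  move=> _; exists (@tzero F n); split; first exact: lieL_zero.
  by move=> sg _ _; rewrite N_zero.
move/andP => [HS Hr]; have [l' [Ll' Hl']] := IH Hr.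
have [a [Ha Hc]] := exists_chain H3 S.
case: (eqVneq S set0) => HS0.
  exists l'; split => // sg Hu Hne; rewrite Hl' // in_cons.
  suff -> : ([set x in sg] == S) = false by [].
  subst S; apply/negP => /eqP E; case: sg Hu Hne E => // x sg _ _ /setP /(_ x).
  by rewrite !inE eqxx.
have Hua : uniq a by rewrite (perm_uniq Ha) enum_uniq.
have Hane : a != [::].
  by rewrite -size_eq0 (perm_size Ha) -cardE -lt0n card_gt0.
have Nb := N_br Hua Hc Hane; have Sb := supp_br Hane.
exists (tadd l' (tscale (N a u / N a (br a)) (br a))); split.
  apply: lieL_add => //; apply: lieL_scale; exact: lieL_br.
move=> sg Hu Hne; rewrite N_add N_scale Hl' // in_cons.
case E: ([set x in sg] == S) => /=.
  have Hp : perm_eq sg a.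
    apply: uniq_perm => // x; rewrite (perm_mem Ha) mem_enum -(eqP E) inE //.
  rewrite (eqP E) (negbTE HS) add0r !(N_perm _ Hp) divfK //.
rewrite (@N_ext sg (br a) (@tzero F n)) ?N_zero ?mulr0 ?addr0 //.
move=> w Hw; apply/eqP; apply: contraFT E => Hb.
have Hpa := Sb _ Hb.
apply/eqP/setP => x; rewrite inE -(perm_mem Hw) (perm_mem Hpa) (perm_mem Ha) mem_enum //.
Qed.

Lemma dir_back (H3 : H3prop) : nichols_eq_F_plus_Lie q.
Proof.
split.
  move=> u _; have [l [Ll Hl]] := build H3 u (enum_uniq (mem [set: {set 'I_n}])).
  exists (u [::]), l; split => //; apply/Char_all => sg Hu; rewrite !N_sub N_scale.
  case: sg Hu => [|x sg] Hu.
    rewrite !N_nil /tone /= (lieL_nil Ll); by rewrite mulr1 subrr subr0.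
  rewrite Hl // mem_enum in_setT N_tone_ne // mulr0 subr0; exact: subrr.
move=> c l Ll Hz; have := Hz 0%N; rewrite /= /tsub /tscale /tone /= (lieL_nil Ll).
by rewrite subr0 mulr1.
Qed.

Lemma deriv2 v a b : tderiv q b (tderiv q a v) [::] = q a b * v [:: a; b] + v [:: b; a].
Proof.
rewrite /tderiv /= big_ord_recl big_ord0 /= big_nil mul1r addr0.
rewrite big_ord_recl big_ord_recl big_ord0 /= !big_cons !big_nil /=.
by rewrite mulr1 mul1r addr0.
Qed.

Lemma tmul2 u v a b : tmul u v [:: a; b] = u [::] * v [:: a; b] + u [:: a] * v [:: b] + u [:: a; b] * v [::].
Proof. by rewrite /tmul !big_ord_recl big_ord0 /= addr0 addrA. Qed.

Lemma letter2 (k a b : 'I_n) : tletter F k [:: a; b] = 0.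
Proof. by rewrite /tletter; case: eqP. Qed.

Lemma lieL_ij l i j : lieL l -> l [:: i; j] + l [:: j; i] = 0.
Proof.
elim=> {l}.
- by rewrite /tzero addr0.
- move=> k; by rewrite !letter2 addr0.
- move=> u v _ Hu _ Hv; rewrite /tadd; by rewrite addrACA Hu Hv addr0.
- move=> c u _ Hu; by rewrite /tscale -mulrDr Hu mulr0.
move=> u v _ _ _ _; rewrite /tcomm /tsub !tmul2; ring.
Qed.

Lemma lieL_ii l i : lieL l -> l [:: i; i] = 0.
Proof.
elim=> {l}.
- by [].
- by move=> k; rewrite letter2.
- move=> u v _ Hu _ Hv; by rewrite /tadd Hu Hv addr0.
- move=> c u _ Hu; by rewrite /tscale Hu mulr0.
move=> u v _ _ _ _; rewrite /tcomm /tsub !tmul2; ring.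
Qed.

Lemma letter0 (k : 'I_n) : tletter F k [::] = 0.
Proof. by []. Qed.

Lemma letter1 (k a : 'I_n) : tletter F k [:: a] = (a == k)%:R.
Proof. by rewrite /tletter eqseq_cons andbT. Qed.

Lemma fwd_H1 : nichols_eq_F_plus_Lie q -> forall i, q i i = -1.
Proof.
move=> [D1 _] i; have [c [l [Ll Hz]]] := D1 _ (tensT_mul (tensT_letter F i) (tensT_letter F i)).
have := Hz 2%N i i; rewrite /= deriv2.
have -> : tsub (tsub (tmul (tletter F i) (tletter F i)) (tscale c (@tone F n))) l [:: i; i] = 1.
  rewrite /tsub /tscale tmul2 !letter1 letter0 letter2 (lieL_ii i Ll) eqxx /tone /=; ring.
by move/eqP; rewrite mulr1 addr_eq0 => /eqP.
Qed.

Lemma fwd_H2 : nichols_eq_F_plus_Lie q -> forall i j, i != j -> q i j * q j i = 1.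
Proof.
move=> [D1 _] i j Hij; have [c [l [Ll Hz]]] := D1 _ (tensT_mul (tensT_letter F i) (tensT_letter F j)).
have e1 := Hz 2%N i j; have e2 := Hz 2%N j i; rewrite /= deriv2 in e1; rewrite /= deriv2 in e2.
set v := tsub _ _ in e1 e2.
have Hl := lieL_ij i j Ll.
have Vij : v [:: i; j] = 1 - l [:: i; j].
  rewrite /v /tsub /tscale tmul2 !letter1 letter0 !letter2 !eqxx /tone /=; ring.
have Vji : v [:: j; i] = l [:: i; j].
  rewrite /v /tsub /tscale tmul2 !letter1 letter0 !letter2 eq_sym (negbTE Hij) /tone /=.
  have -> : l [:: j; i] = - l [:: i; j] by apply/eqP; rewrite -addr_eq0 addrC Hl.
  ring.
rewrite Vij Vji in e1 e2.
set al := l [:: i; j] in e1 e2.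
have E : al * (q i j * q j i - 1) = q i j * (q j i * al + (1 - al)) - (q i j * (1 - al) + al) by ring.
rewrite e1 e2 mulr0 subr0 in E.
have Hal : al != 0.
  apply/negP => /eqP H0; move: e2; rewrite H0 mulr0 add0r subr0 => /eqP; by rewrite oner_eq0.
by apply/eqP; rewrite -subr_eq0; move/eqP: E; rewrite mulf_eq0 (negbTE Hal).
Qed.

Lemma fwd_H3 : nichols_eq_F_plus_Lie q -> H3prop.
Proof.
move=> [D1 _] m h Hm hinj.
pose a0 := [seq h j | j <- enum 'I_m].
have Hu0 : uniq a0 by rewrite map_inj_uniq // enum_uniq.
have Hs0 : size a0 = m by rewrite size_map size_enum_ord.
have Hne : a0 != [::] by rewrite -size_eq0 Hs0 -lt0n (leq_trans _ Hm).
have [c [l [Ll Hz]]] := D1 _ (tensT_mono a0).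
have := (Char_all _).1 Hz a0 Hu0; rewrite !N_sub N_scale N_tone_ne // mulr0 subr0.
move/eqP; rewrite subr_eq0 => /eqP HN.
have HNl : N a0 l != 0 by rewrite -HN N_mono.
have [a [Ha Hc]] := lemG Ll Hu0 HNl.
have Hm0 : (0 < m)%N by apply: leq_trans Hm.
pose d0 := h (Ordinal Hm0).
pose f := fun k : 'I_m => insubd k (index (nth d0 a k) a0) : 'I_m.
have Hsa : size a = m by rewrite (perm_size Ha) Hs0.
have Hua : uniq a by rewrite (perm_uniq Ha).
have Hf : forall k, h (f k) = nth d0 a k.
  move=> k; have Hx : nth d0 a k \in a0 by rewrite -(perm_mem Ha) mem_nth // Hsa.
  have Hi0 : (index (nth d0 a k) a0 < size a0)%N by rewrite index_mem.
  have Hi : (index (nth d0 a k) a0 < m)%N by apply: leq_trans Hi0 _; rewrite Hs0.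
  have Hv : val (f k) = index (nth d0 a k) a0 by rewrite /f val_insubd Hi.
  transitivity (nth d0 a0 (f k)).
    by rewrite /a0 (nth_map (f k)) ?size_enum_ord // nth_ord_enum.
  by rewrite Hv nth_index.
have finj : injective f.
  move=> k1 k2 E; apply/val_inj/eqP; rewrite -(nth_uniq d0 _ _ Hua) ?Hsa ?ltn_ord //.
  change (nth d0 a k1 == nth d0 a k2); by rewrite -!Hf E.
exists (perm finj).
have HG : forall j, h (perm finj j) = nth d0 a j by move=> j; rewrite permE Hf.
by move: (prod_conv Hsa HG) => /= ->.
Qed.

End Work.

Theorem proposition6p4 (F : closedFieldType) (charF0 : [pchar F] =i pred0)
  (n : nat) (q : 'I_n -> 'I_n -> F) (q_neq0 : forall i j, q i j != 0) :
  nichols_eq_F_plus_Lie q <->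
  [/\ (forall i, q i i = -1),
      (forall i j, i != j -> q i j * q j i = 1)
    & (forall (m : nat) (h : 'I_m -> 'I_n), (2 <= m)%N -> injective h ->
        exists tau : 'S_m,
          \prod_(k < m | (k.+1 < m)%N)
             ((\prod_(l < m | (k < l)%N) q (h (tau k)) (h (tau l))) - 1) != 0)].
Proof.
split.
  move=> D; have H1' := fwd_H1 D; have H2' := fwd_H2 D.
  split => //; exact: (fwd_H3 H1' H2' q_neq0 D).
case=> H1' H2' H3'; exact: (dir_back H1' H2' q_neq0 H3').
Qed.
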